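(* For $d>0$ let $\beta_d:\mathbb{R}\setminus 2\pi\mathbb{Z}\to\mathbb{R}$ be the function \[ \beta_{d}(s) = -\frac{s}{d} + \frac{\pi}{d}\coth\Big(\frac{\pi s}{2d}\Big) + \frac{\pi}{d} \sum_{n=1}^{\infty} \frac{2\sinh(\frac{\pi s}{d})}{\cosh(\frac{\pi s}{d})-\cosh(\frac{2\pi^2 n}{d})}. \] Equivalently, writing $x=\pi^2/(2d)$, \[ \pi\beta_d(\pi/2) = 2x\coth(x/2) - x - 4x\sinh(x)\sum_{n=1}^\infty \frac{1}{\cosh(4nx)-\cosh(x)}. \] Then \[ \beta_d(\pi/2)\ \ge\ 1 \qquad\text{for all } d\in(0,\infty). \]
   Context: The function $\beta_d$ is the kernel of the periodic Hilbert transform $\mathcal{C}_d$ on the strip $\{(x,y)\in\mathbb{R}^2: -d<y<0\}$: for a smooth $2\pi$-periodic mean-zero $F:\mathbb{R}\to\mathbb{R}$, $(\mathcal{C}_d F)(x)=\frac{1}{2\pi}\,\mathrm{PV}\int_{-\pi}^{\pi}\beta_d(x-s)F(s)\,ds$, where $\mathcal{C}_d$ maps $\sum_{n\ge1}(a_n\cos nx+b_n\sin nx)$ to $\sum_{n\ge1}(a_n\coth(nd)\sin nx - b_n\coth(nd)\cos nx)$. This interpretation is background only; the claim concerns the explicit formula for $\beta_d$. *)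

(* Defs.v *)
From Stdlib Require Import Reals.
From Coquelicot Require Import Coquelicot.
Open Scope R_scope.

Definition coth (y : R) : R := cosh y / sinh y.

Definition beta_term (d s : R) (n : nat) : R :=
  2 * sinh (PI * s / d) / (cosh (PI * s / d) - cosh (2 * PI ^ 2 * INR n / d)).

Definition beta (d s : R) : R :=
  - s / d + PI / d * coth (PI * s / (2 * d))
  + PI / d * Series (fun k : nat => beta_term d s (S k)).

(* Main.v *)
Require Import Defs.
From Stdlib Require Import Reals Lra Lia.
From Coquelicot Require Import Coquelicot.
Open Scope R_scope.


Fixpoint fsum (f : nat -> R) (n : nat) : R :=
  match n with O => 0 | S m => fsum f m + f m end.

Lemma fsum_ext f g n : (forall k, (k < n)%nat -> f k = g k) -> fsum f n = fsum g n.
Proof. induction n; simpl; intros; auto. rewrite IHn, H; auto. Qed.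

Lemma fsum_plus f g n : fsum (fun k => f k + g k) n = fsum f n + fsum g n.
Proof. induction n; simpl; [ring|rewrite IHn; ring]. Qed.

Lemma fsum_minus f g n : fsum (fun k => f k - g k) n = fsum f n - fsum g n.
Proof. induction n; simpl; [ring|rewrite IHn; ring]. Qed.

Lemma fsum_scal c f n : fsum (fun k => c * f k) n = c * fsum f n.
Proof. induction n; simpl; [ring|rewrite IHn; ring]. Qed.

Lemma fsum_le f g n : (forall k, f k <= g k) -> fsum f n <= fsum g n.
Proof. induction n; simpl; intros; [lra| specialize (IHn H); specialize (H n); lra]. Qed.

Lemma fsum_zero f n : (forall k, f k = 0) -> fsum f n = 0.
Proof. induction n; simpl; intros; [lra| rewrite IHn, H; auto; ring]. Qed.

Lemma fsum_sq a n : fsum (fun i => fsum (fun k => a i * a k) n) n = (fsum a n)^2.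
Proof.
  transitivity (fsum (fun i => a i * fsum a n) n).
  - apply fsum_ext; intros. apply fsum_scal.
  - rewrite (fsum_ext _ (fun i => fsum a n * a i)) by (intros; ring).
    rewrite fsum_scal. ring.
Qed.

Lemma fsum_telescope f n : fsum (fun k => f (S k) - f k) n = f n - f O.
Proof. induction n; simpl; [ring| rewrite IHn; ring]. Qed.

Lemma fsum_shift f n : fsum f (S n) = f O + fsum (fun k => f (S k)) n.
Proof. induction n; simpl in *; [ring| rewrite IHn; ring]. Qed.

Lemma fsum_sum_f f n : fsum f (S n) = sum_f_R0 f n.
Proof. induction n; simpl in *; [ring| rewrite IHn; ring]. Qed.

Lemma is_derive_eq (f : R -> R) x l l' : is_derive f x l -> l = l' -> is_derive f x l'.
Proof. intros; subst; auto. Qed.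

Lemma is_derive_fsum (f df : nat -> R -> R) n x :
  (forall k, is_derive (f k) x (df k x)) ->
  is_derive (fun t => fsum (fun k => f k t) n) x (fsum (fun k => df k x) n).
Proof.
  intros H; induction n; simpl.
  - auto_derive; auto.
  - apply (is_derive_plus (fun t => fsum (fun k => f k t) n) (f n)); auto.
Qed.

Lemma incr_deriv (f df : R -> R) a b : a <= b -> (forall x, is_derive f x (df x)) ->
  (forall x, 0 <= df x) -> f a <= f b.
Proof.
  intros Hab Hd Hp.
  destruct (MVT_gen f a b df) as [c [_ Hc]].
  - intros; apply Hd.
  - intros; apply continuity_pt_filterlim. apply (ex_derive_continuous (K:=R_AbsRing) (V:=R_NormedModule) f). eexists; apply Hd.
  - specialize (Hp c). nra.
Qed.

Lemma lim_lemma (A X K c : R) : 0 <= K -> 0 < c ->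
  (forall n : nat, A - K / (1 + INR n * c) <= X) -> A <= X.
Proof.
  intros HK Hc H.
  destruct (Rle_or_lt A X) as [|Hlt]; auto.
  destruct (INR_archimed ((A - X) * c) K) as [n Hn]; [nra|].
  specialize (H n). pose proof (pos_INR n).
  assert (K / (1 + INR n * c) < A - X).
  { apply Rmult_lt_reg_r with (1 + INR n * c); [nra|].
    unfold Rdiv; rewrite Rmult_assoc, Rinv_l; nra. }
  lra.
Qed.


Definition sech t := 2 / (exp t + exp (- t)).
Definition cc a b := exp a * exp b / (exp a ^ 2 + exp b ^ 2).
Definition ee a b r := exp a * exp b * exp (- ((exp a ^ 2 + exp b ^ 2) * r)) / (exp a ^ 2 + exp b ^ 2).
Definition ww a b := exp a * exp b / (exp a ^ 2 + exp b ^ 2) / (exp a ^ 2 + exp b ^ 2).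
Definition ph a r := exp a * exp (- (exp a ^ 2 * r)).
Definition gg a b r := cc a b - ee a b r.

Lemma sech_pos t : 0 < sech t.
Proof. unfold sech. pose proof (exp_pos t); pose proof (exp_pos (-t)).
  apply Rdiv_lt_0_compat; lra. Qed.

Lemma sech_even t : sech (- t) = sech t.
Proof. unfold sech. rewrite Ropp_involutive. f_equal; ring. Qed.

Lemma sech_cc a b : sech (a - b) = 2 * cc a b.
Proof.
  unfold sech, cc.
  replace (a - b) with (a + - b) by ring.
  replace (- (a + - b)) with (b + - a) by ring.
  rewrite !exp_plus, !exp_Ropp.
  pose proof (exp_pos a); pose proof (exp_pos b).
  field. split; [|lra]. nra.
Qed.

Lemma gg_deriv a b r : is_derive (gg a b) r (ph a r * ph b r).
Proof.
  unfold gg, cc, ee, ph.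
  pose proof (exp_pos a); pose proof (exp_pos b).
  auto_derive.
  - nra.
  - replace (- ((exp a * (exp a * 1) + exp b * (exp b * 1)) * r)) with (- (exp a ^ 2 * r) + - (exp b ^ 2 * r)) by ring.
    rewrite exp_plus. field. nra.
Qed.

Lemma gg_0 a b : gg a b 0 = 0.
Proof. unfold gg, cc, ee. rewrite Rmult_0_r, Ropp_0, exp_0. field.
  pose proof (exp_pos a); pose proof (exp_pos b). nra. Qed.

Lemma ee_nonneg a b r : 0 <= ee a b r.
Proof. unfold ee. pose proof (exp_pos a); pose proof (exp_pos b).
  pose proof (exp_pos (- ((exp a ^ 2 + exp b ^ 2) * r))).
  apply Rlt_le, Rdiv_lt_0_compat; [|nra]. repeat apply Rmult_lt_0_compat; auto. Qed.

Lemma ee_le a b r : 0 < r -> ee a b r <= ww a b / r.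
Proof.
  intros Hr. unfold ee, ww. pose proof (exp_pos a); pose proof (exp_pos b).
  set (s := exp a ^ 2 + exp b ^ 2).
  assert (Hs : 0 < s) by (unfold s; nra).
  rewrite exp_Ropp.
  pose proof (exp_ineq1_le (s * r)).
  pose proof (exp_pos (s * r)).
  replace (exp a * exp b * / exp (s * r) / s) with ((exp a * exp b / s) * / exp (s * r)) by (field; lra).
  replace (exp a * exp b / s / s / r) with ((exp a * exp b / s) * / (s * r)) by (field; lra).
  apply Rmult_le_compat_l.
  - apply Rlt_le, Rdiv_lt_0_compat; nra.
  - apply Rinv_le_contravar; nra.
Qed.

Lemma is_derive_minusR (f g : R -> R) x df dg : is_derive f x df -> is_derive g x dg ->
  is_derive (fun t => f t - g t) x (df - dg).
Proof. intros. exact (is_derive_minus f g x df dg H H0). Qed.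
Lemma is_derive_plusR (f g : R -> R) x df dg : is_derive f x df -> is_derive g x dg ->
  is_derive (fun t => f t + g t) x (df + dg).
Proof. intros. exact (is_derive_plus f g x df dg H H0). Qed.

Section Gram.
Variables (x y : nat -> R) (n : nat).

Definition Fcomb (F : R -> R -> R) i k := F (x i) (x k) + F (y i) (y k) - F (x i) (y k) - F (y i) (x k).

Definition Hr r := fsum (fun i => fsum (fun k => Fcomb (fun a b => gg a b r) i k) n) n.
Definition Er r := fsum (fun i => fsum (fun k => Fcomb (fun a b => ee a b r) i k) n) n.
Definition Qs := fsum (fun i => fsum (fun k => Fcomb (fun a b => sech (a - b)) i k) n) n.

Lemma Hr_deriv r : is_derive Hr r ((fsum (fun i => ph (x i) r - ph (y i) r) n) ^ 2).
Proof.
  rewrite <- fsum_sq.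
  unfold Hr.
  apply (is_derive_fsum (fun i t => fsum (fun k => Fcomb (fun a b => gg a b t) i k) n)
     (fun i t => fsum (fun k => (ph (x i) t - ph (y i) t) * (ph (x k) t - ph (y k) t)) n)).
  intros i.
  apply (is_derive_fsum (fun k t => Fcomb (fun a b => gg a b t) i k)
     (fun k t => (ph (x i) t - ph (y i) t) * (ph (x k) t - ph (y k) t))).
  intros k. unfold Fcomb.
  eapply is_derive_eq.
  - apply is_derive_minusR; [apply is_derive_minusR; [apply is_derive_plusR|]|]; apply gg_deriv.
  - change (@eq R (ph (x i) r * ph (x k) r + ph (y i) r * ph (y k) r - ph (x i) r * ph (y k) r - ph (y i) r * ph (x k) r) ((ph (x i) r - ph (y i) r) * (ph (x k) r - ph (y k) r))). ring.
Qed.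

Lemma Hr_0 : Hr 0 = 0.
Proof. unfold Hr. apply fsum_zero; intros; apply fsum_zero; intros. unfold Fcomb. rewrite !gg_0. ring. Qed.

Lemma Hr_nonneg r : 0 <= r -> 0 <= Hr r.
Proof. intros. rewrite <- Hr_0. eapply incr_deriv; eauto. apply Hr_deriv. intros; simpl. nra. Qed.

Lemma Qs_split r : Qs = 2 * Hr r + 2 * Er r.
Proof.
  unfold Qs, Hr, Er. rewrite <- !fsum_scal, <- fsum_plus.
  apply fsum_ext; intros. rewrite <- !fsum_scal, <- fsum_plus.
  apply fsum_ext; intros. unfold Fcomb. rewrite !sech_cc. unfold gg. ring.
Qed.

Definition Wc := fsum (fun i => fsum (fun k => ww (x i) (y k) + ww (y i) (x k)) n) n.

Lemma Er_lower r : 0 < r -> - Wc / r <= Er r.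
Proof.
  intros Hr. unfold Wc, Er.
  replace (- fsum (fun i => fsum (fun k => ww (x i) (y k) + ww (y i) (x k)) n) n / r)
   with ((- / r) * fsum (fun i => fsum (fun k => ww (x i) (y k) + ww (y i) (x k)) n) n) by (field; lra).
  rewrite <- fsum_scal. apply fsum_le; intros i.
  rewrite <- fsum_scal. apply fsum_le; intros k.
  unfold Fcomb.
  pose proof (ee_nonneg (x i) (x k) r); pose proof (ee_nonneg (y i) (y k) r).
  pose proof (ee_le (x i) (y k) r Hr); pose proof (ee_le (y i) (x k) r Hr).
  unfold Rdiv in *. nra.
Qed.

Lemma Wc_nonneg : 0 <= Wc.
Proof.
  unfold Wc. rewrite <- (fsum_zero (fun _ => 0) n) by auto.
  apply fsum_le; intros i. rewrite <- (fsum_zero (fun _ => 0) n) by auto.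
  apply fsum_le; intros k. unfold ww.
  pose proof (exp_pos (x i)); pose proof (exp_pos (x k));pose proof (exp_pos (y i)); pose proof (exp_pos (y k)).
  apply Rplus_le_le_0_compat; apply Rlt_le; repeat apply Rdiv_lt_0_compat; nra.
Qed.

Lemma gram : 0 <= Qs.
Proof.
  apply (lim_lemma 0 Qs (2 * Wc) 1); [pose proof Wc_nonneg; lra|lra|].
  intros m. pose proof (pos_INR m).
  rewrite (Qs_split (1 + INR m * 1)).
  pose proof (Hr_nonneg (1 + INR m * 1)).
  pose proof (Er_lower (1 + INR m * 1)).
  assert (- Wc / (1 + INR m * 1) <= Er (1 + INR m * 1)) by (apply H1; lra).
  unfold Rdiv in *. 
  assert (0 <= Hr (1 + INR m * 1)) by (apply H0; lra).
  lra.
Qed.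
End Gram.


Lemma is_series_scalR c a l : is_series a l -> is_series (fun n => c * a n) (c * l).
Proof. intros H. exact (is_series_scal_l c a l H). Qed.
Lemma is_series_plusR a b la lb : is_series a la -> is_series b lb ->
  is_series (fun n => a n + b n) (la + lb).
Proof. intros H H'. exact (is_series_plus a b la lb H H'). Qed.
Lemma is_series_minusR a b la lb : is_series a la -> is_series b lb ->
  is_series (fun n => a n - b n) (la - lb).
Proof. intros H H'. exact (is_series_minus a b la lb H H'). Qed.
Lemma is_series_extR (a b : nat -> R) l : (forall n, a n = b n) -> is_series a l -> is_series b l.
Proof. intros. exact (is_series_ext a b l H H0). Qed.
Lemma ex_series_leR (a b : nat -> R) : (forall n, Rabs (a n) <= b n) -> ex_series b -> ex_series a.
Proof. intros. exact (ex_series_le a b H H0). Qed.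

Lemma is_series_geomS q : 0 <= q < 1 -> is_series (fun k => q ^ (S k)) (q / (1 - q)).
Proof.
  intros Hq. apply is_series_extR with (fun k => q * q ^ k); [intros; reflexivity|].
  unfold Rdiv. apply is_series_scalR. apply is_series_geom. rewrite Rabs_right; lra.
Qed.

Lemma ex_series_geomS C q : 0 <= q < 1 -> ex_series (fun k => C * q ^ (S k)).
Proof. intros. eexists. apply is_series_scalR, is_series_geomS; auto. Qed.

Lemma exp_pow_nat h n : exp (- (INR n * h)) = exp (- h) ^ n.
Proof.
  induction n.
  - simpl. rewrite Rmult_0_l, Ropp_0, exp_0. auto.
  - rewrite S_INR. replace (- ((INR n + 1) * h)) with (- (INR n * h) + - h) by ring.
    rewrite exp_plus, IHn. simpl. ring.
Qed.

Lemma sech_le_exp u : sech u <= 2 * exp (- u).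
Proof.
  unfold sech. pose proof (exp_pos u); pose proof (exp_pos (-u)).
  rewrite exp_Ropp in *. unfold Rdiv. apply Rmult_le_compat_l; [lra|].
  apply Rinv_le_contravar; lra.
Qed.

Section PD.
Variables (h t : R).
Hypothesis hpos : 0 < h.

Let q := exp (- h).
Lemma q_bounds : 0 < q < 1.
Proof. unfold q. split; [apply exp_pos|]. rewrite <- exp_0. apply exp_increasing. lra. Qed.

Definition Pser (t : R) k := sech (t + INR (S k) * h) + sech (t - INR (S k) * h).

Lemma Pser_bound s k : Rabs (Pser s k) <= (2 * exp (- s) + 2 * exp s) * q ^ (S k).
Proof.
  unfold Pser. pose proof (sech_pos (s + INR (S k) * h)); pose proof (sech_pos (s - INR (S k) * h)).
  rewrite Rabs_right by lra.
  pose proof (sech_le_exp (s + INR (S k) * h)).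
  rewrite <- (sech_even (s - INR (S k) * h)).
  pose proof (sech_le_exp (- (s - INR (S k) * h))).
  replace (- (s + INR (S k) * h)) with (- s + - (INR (S k) * h)) in H1 by ring.
  replace (- - (s - INR (S k) * h)) with (s + - (INR (S k) * h)) in H2 by ring.
  rewrite exp_plus in H1, H2. unfold q. rewrite exp_pow_nat in H1, H2. lra.
Qed.

Lemma Pser_ex s : ex_series (Pser s).
Proof. eapply ex_series_leR; [apply Pser_bound|]. apply ex_series_geomS. pose proof q_bounds; lra. Qed.

Definition Pt (s : R) := sech s + Series (Pser s).

Definition G (s : R) := 2 * sech (s * h) - sech (s * h - t) - sech (s * h + t).

Lemma G_even s : G (- s) = G s.
Proof. unfold G. rewrite <- (sech_even (- s * h)), <- (sech_even (- s * h - t)), <- (sech_even (- s * h + t)).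
  replace (- (- s * h)) with (s * h) by ring.
  replace (- (- s * h - t)) with (s * h + t) by ring.
  replace (- (- s * h + t)) with (s * h - t) by ring. ring. Qed.

Lemma rev_sum (F : R -> R) n : fsum (fun k => F (INR n - INR k)) n = fsum (fun d => F (INR (S d))) n.
Proof.
  induction n.
  - reflexivity.
  - rewrite fsum_shift.
    transitivity (F (INR (S n)) + fsum (fun k => F (INR n - INR k)) n).
    + f_equal.
      * f_equal. simpl INR at 2. ring.
      * apply fsum_ext; intros. f_equal. rewrite !S_INR. ring.
    + rewrite IHn. simpl. ring.
Qed.

Lemma collapse (F : R -> R) n :
  fsum (fun i => fsum (fun k => F (INR i - INR k)) n) n =
  INR n * F 0 + fsum (fun d => (INR n - INR (S d)) * (F (INR (S d)) + F (- INR (S d)))) n.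
Proof.
  induction n.
  - simpl. ring.
  - transitivity (fsum (fun i => fsum (fun k => F (INR i - INR k)) n + F (INR i - INR n)) n
       + (fsum (fun k => F (INR n - INR k)) n + F 0)).
    { simpl fsum at 1. f_equal. simpl. f_equal. rewrite Rminus_diag. auto. }
    rewrite fsum_plus, IHn.
    assert (A1 : fsum (fun i => F (INR i - INR n)) n = fsum (fun d => F (- INR (S d))) n).
    { rewrite <- (rev_sum (fun s => F (- s))). apply fsum_ext; intros. f_equal. ring. }
    rewrite A1, rev_sum.
    assert (A2 : fsum (fun d => (INR (S n) - INR (S d)) * (F (INR (S d)) + F (- INR (S d)))) (S n) =
       fsum (fun d => (INR n - INR (S d)) * (F (INR (S d)) + F (- INR (S d)))) n
       + fsum (fun d => F (INR (S d))) n + fsum (fun d => F (- INR (S d))) n).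
    { cbn [fsum]. rewrite Rminus_diag, Rmult_0_l, Rplus_0_r.
      rewrite <- !fsum_plus. apply fsum_ext; intros. rewrite (S_INR n). ring. }
    rewrite A2, (S_INR n). ring.
Qed.

Lemma dq_closed n : (1 - q) ^ 2 * fsum (fun d => INR (S d) * q ^ (S d)) n =
   q - INR (S n) * q ^ (S n) + INR n * q ^ (S (S n)).
Proof.
  induction n.
  - simpl. ring.
  - cbn [fsum]. rewrite Rmult_plus_distr_l, IHn. rewrite !S_INR. simpl. ring.
Qed.

Lemma dq_sum n : fsum (fun d => INR (S d) * q ^ (S d)) n <= q / (1 - q) ^ 2.
Proof.
  pose proof q_bounds as [Hq0 Hq1].
  assert (Hd : 0 < (1 - q) ^ 2) by nra.
  apply Rmult_le_reg_l with ((1 - q) ^ 2); auto.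
  rewrite dq_closed. replace ((1 - q) ^ 2 * (q / (1 - q) ^ 2)) with q by (field; lra).
  assert (0 <= q ^ (S n)) by (apply pow_le; lra).
  assert (INR n * q ^ (S (S n)) <= INR (S n) * q ^ (S n)).
  { rewrite S_INR. change (q ^ (S (S n))) with (q * q ^ (S n)).
    pose proof (pos_INR n).
    assert (0 <= INR n * q ^ (S n) * (1 - q)) by (apply Rmult_le_pos; [apply Rmult_le_pos|]; lra).
    nra. }
  lra.
Qed.

Let C := 2 * exp t + 2 * exp (- t).

Lemma G_lower d : - C * q ^ (S d) <= G (INR (S d)).
Proof.
  unfold G, C, q. set (s := INR (S d) * h).
  pose proof (sech_pos s). pose proof (sech_le_exp (s - t)). pose proof (sech_le_exp (s + t)).
  replace (- (s - t)) with (t + - s) in H0 by ring.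
  replace (- (s + t)) with (- t + - s) in H1 by ring.
  rewrite exp_plus in H0, H1. unfold s in *. rewrite exp_pow_nat in H0, H1. lra.
Qed.

Lemma cesaro_ineq n : - (2 * (C * (q / (1 - q) ^ 2))) <=
   INR n * (G 0 + 2 * fsum (fun d => G (INR (S d))) n).
Proof.
  pose proof (gram (fun i => INR i * h) (fun i => t + INR i * h) n) as Hg.
  unfold Qs in Hg.
  rewrite (fsum_ext _ (fun i => fsum (fun k => G (INR i - INR k)) n)) in Hg.
  2: { intros i _. apply fsum_ext; intros k _. unfold Fcomb, G.
       replace (INR i * h - INR k * h) with ((INR i - INR k) * h) by ring.
       replace (t + INR i * h - (t + INR k * h)) with ((INR i - INR k) * h) by ring.
       replace (INR i * h - (t + INR k * h)) with ((INR i - INR k) * h - t) by ring.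
       replace (t + INR i * h - INR k * h) with ((INR i - INR k) * h + t) by ring. ring. }
  rewrite collapse in Hg.
  rewrite (fsum_ext _ (fun d => INR n * (2 * G (INR (S d))) - 2 * (INR (S d) * G (INR (S d))))) in Hg.
  2: { intros d _. rewrite G_even. ring. }
  rewrite fsum_minus, !fsum_scal in Hg.
  assert (fsum (fun d => - C * (INR (S d) * q ^ (S d))) n <= fsum (fun d => INR (S d) * G (INR (S d))) n).
  { apply fsum_le; intros d. pose proof (G_lower d). pose proof (pos_INR (S d)).
    replace (- C * (INR (S d) * q ^ (S d))) with (INR (S d) * (- C * q ^ (S d))) by ring.
    apply Rmult_le_compat_l; auto. }
  rewrite fsum_scal in H.
  pose proof (dq_sum n).
  assert (0 <= C) by (unfold C; pose proof (exp_pos t); pose proof (exp_pos (-t)); lra).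
  assert (C * fsum (fun d => INR (S d) * q ^ (S d)) n <= C * (q / (1 - q) ^ 2)) by (apply Rmult_le_compat_l; auto).
  nra.
Qed.

Lemma Pt_max : Pt t <= Pt 0.
Proof.
  set (a := fun d => G (INR (S d))).
  assert (Ha : is_series a (Series (Pser 0) - Series (Pser t))).
  { apply is_series_extR with (fun d => Pser 0 d - Pser t d).
    - intros d. unfold a, Pser, G. rewrite Rplus_0_l.
      replace (0 - INR (S d) * h) with (- (INR (S d) * h)) by ring. rewrite sech_even.
      replace (t + INR (S d) * h) with (INR (S d) * h + t) by ring.
      rewrite <- (sech_even (t - INR (S d) * h)).
      replace (- (t - INR (S d) * h)) with (INR (S d) * h - t) by ring. ring.
    - apply is_series_minusR; apply Series_correct, Pser_ex. }
  set (l := Series (Pser 0) - Series (Pser t)) in Ha.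
  set (K := 2 * (C * (q / (1 - q) ^ 2))).
  assert (HK : 0 <= K).
  { unfold K, C. pose proof q_bounds. pose proof (exp_pos t); pose proof (exp_pos (-t)).
    apply Rmult_le_pos; [lra|]. apply Rmult_le_pos; [lra|]. apply Rlt_le, Rdiv_lt_0_compat; [lra|]. nra. }
  assert (G 0 + 2 * l >= 0).
  { destruct (Rge_or_lt (G 0 + 2 * l) 0) as [|HL]; auto.
    exfalso. set (L := G 0 + 2 * l) in *.
    apply is_series_Reals in Ha.
    destruct (Ha (- L / 4)) as [N HN]; [lra|].
    destruct (INR_archimed (- L / 2) K) as [M HM]; [lra|].
    set (m := Nat.max N M).
    specialize (HN m (Nat.le_max_l N M)). unfold Rdist in HN.
    pose proof (cesaro_ineq (S m)). fold K in H.
    rewrite fsum_sum_f in H. fold a in H.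
    assert (INR M <= INR (S m)) by (apply le_INR; unfold m; lia).
    assert (Hs : G 0 + 2 * sum_f_R0 a m < L / 2).
    { apply Rabs_def2 in HN. destruct HN. assert (L = G 0 + 2 * l) by reflexivity. lra. }
    assert (0 < INR (S m)) by (apply lt_0_INR; lia).
    assert (INR (S m) * (G 0 + 2 * sum_f_R0 a m) < INR (S m) * (L / 2)) by (apply Rmult_lt_compat_l; auto).
    nra. }
  unfold Pt. unfold l in H. unfold G in H.
  rewrite Rmult_0_l, Rplus_0_l, Rminus_0_l, sech_even in H. lra.
Qed.
End PD.


Lemma fsum_le_series (a : nat -> R) N : (forall k, 0 <= a k) -> ex_series a -> fsum a N <= Series a.
Proof.
  intros Hp Hex. pose proof (Series_correct a Hex) as Hs.
  apply is_series_Reals in Hs.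
  destruct N.
  - simpl. pose proof (sum_incr a 0 (Series a) Hs Hp). simpl in H. specialize (Hp 0%nat). lra.
  - rewrite fsum_sum_f. apply sum_incr; auto.
Qed.

Lemma atan_le_id z : 0 <= z -> atan z <= z.
Proof.
  intros Hz.
  assert (0 - atan 0 <= z - atan z).
  { apply (incr_deriv (fun z => z - atan z) (fun z => 1 - / (1 + z ^ 2))); auto.
    - intros x. auto_derive; auto. simpl. field. nra.
    - intros x. assert (1 <= 1 + x ^ 2) by nra.
      assert (/ (1 + x ^ 2) <= 1).
      { rewrite <- Rinv_1. apply Rinv_le_contravar; lra. }
      lra. }
  rewrite atan_0 in H. lra.
Qed.

Lemma atan_nonneg z : 0 <= z -> 0 <= atan z.
Proof. intros. rewrite <- atan_0. destruct H; [apply Rlt_le, atan_increasing; auto| subst; lra]. Qed.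

Definition AA u := 2 * atan (exp u).

Lemma AA_deriv c s : is_derive (fun s => AA (s + c)) s (sech (s + c)).
Proof.
  unfold AA, sech. pose proof (exp_pos (s + c)). auto_derive; auto.
  rewrite exp_Ropp. revert H. generalize (exp (s + c)). intros E HE.
  assert (0 < / E) by (apply Rinv_0_lt_compat; auto).
  field. repeat split; nra.
Qed.

Lemma AA_deriv' c s : is_derive (fun s => AA (s - c)) s (sech (s - c)).
Proof.
  unfold AA, sech. pose proof (exp_pos (s - c)). auto_derive; auto.
  change (s + - c) with (s - c). rewrite exp_Ropp. revert H. generalize (exp (s - c)). intros E HE.
  assert (0 < / E) by (apply Rinv_0_lt_compat; auto).
  field. repeat split; nra.
Qed.

Section Riemann.
Variable h : R.
Hypothesis hpos : 0 < h.

Let P0 := Pt h 0.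

Definition Phi N s := s * P0 - (AA (s + 0) + fsum (fun k => AA (s + INR (S k) * h) + AA (s - INR (S k) * h)) N).

Lemma Phi_incr N : Phi N 0 <= Phi N h.
Proof.
  apply (incr_deriv (Phi N) (fun s => P0 - (sech (s + 0) + fsum (fun k => Pser h s k) N))).
  - lra.
  - intros s. unfold Phi.
    apply is_derive_minusR.
    + apply (is_derive_eq _ _ (1 * P0)); [auto_derive; auto; ring| apply Rmult_1_l].
    + apply is_derive_plusR; [apply AA_deriv|].
      apply (is_derive_fsum (fun k s => AA (s + INR (S k) * h) + AA (s - INR (S k) * h)) (fun k s => Pser h s k)).
      intros k. unfold Pser. apply is_derive_plusR; [apply AA_deriv| apply AA_deriv'].
  - intros s. simpl.
    assert (sech (s + 0) + fsum (fun k => Pser h s k) N <= Pt h s).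
    { unfold Pt. rewrite Rplus_0_r. apply Rplus_le_compat_l. apply fsum_le_series.
      - intros k. unfold Pser. pose proof (sech_pos (s + INR (S k) * h)); pose proof (sech_pos (s - INR (S k) * h)). lra.
      - apply Pser_ex; auto. }
    pose proof (Pt_max h s hpos). unfold P0. lra.
Qed.

Lemma hP0_bound N : AA (INR (S N) * h) - AA (- (INR N * h)) <= h * P0.
Proof.
  pose proof (Phi_incr N). unfold Phi in H.
  set (f := fun k => AA (INR (S k) * h)).
  set (g := fun k => AA (- (INR k * h))).
  assert (E : fsum (fun k => AA (h + INR (S k) * h) + AA (h - INR (S k) * h)) N
            - fsum (fun k => AA (0 + INR (S k) * h) + AA (0 - INR (S k) * h)) N
            = (f N - f O) - (g N - g O)).
  { rewrite <- !fsum_telescope, <- fsum_minus, <- fsum_minus. apply fsum_ext; intros k _.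
    unfold f, g. rewrite !(S_INR (S k)), !(S_INR k).
    replace (h + (INR k + 1) * h) with ((INR k + 1 + 1) * h) by ring.
    replace (h - (INR k + 1) * h) with (- (INR k * h)) by ring.
    replace (0 + (INR k + 1) * h) with ((INR k + 1) * h) by ring.
    replace (0 - (INR k + 1) * h) with (- ((INR k + 1) * h)) by ring. ring. }
  unfold f, g in E. cbv beta in E.
  replace (INR (S 0) * h) with h in E by (simpl; ring).
  replace (- (INR 0 * h)) with 0 in E by (simpl; ring).
  rewrite !Rplus_0_r in H. rewrite Rmult_0_l in H.
  lra.
Qed.

Lemma hP0_ge_pi : PI <= h * P0.
Proof.
  apply (lim_lemma PI (h * P0) 4 h); [lra|auto|].
  intros N. pose proof (hP0_bound N).
  unfold AA in H.
  set (u := INR (S N) * h) in H.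
  assert (Hu : INR N * h <= u) by (unfold u; rewrite S_INR; lra).
  pose proof (exp_pos u).
  rewrite <- (Rinv_inv (exp u)) in H.
  rewrite atan_inv in H by (apply Rinv_0_lt_compat; auto).
  rewrite <- exp_Ropp in H.
  pose proof (atan_le_id (exp (- u)) (Rlt_le _ _ (exp_pos _))).
  pose proof (atan_le_id (exp (- (INR N * h))) (Rlt_le _ _ (exp_pos _))).
  assert (exp (- u) <= exp (- (INR N * h))).
  { destruct (Req_dec u (INR N * h)) as [->|]; [lra|]. apply Rlt_le, exp_increasing. lra. }
  assert (exp (- (INR N * h)) <= 1 / (1 + INR N * h)).
  { rewrite exp_Ropp. unfold Rdiv. rewrite Rmult_1_l. pose proof (exp_ineq1_le (INR N * h)).
    pose proof (pos_INR N). apply Rinv_le_contravar; nra. }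
  unfold Rdiv in *. lra.
Qed.
End Riemann.


Lemma coth_exp y : 0 < y -> coth y = (1 + exp (- y) ^ 2) / (1 - exp (- y) ^ 2).
Proof.
  intros Hy. unfold coth, cosh, sinh.
  assert (HE : 0 < exp (- y) < 1).
  { split; [apply exp_pos|]. rewrite <- exp_0. apply exp_increasing. lra. }
  replace (exp y) with (/ exp (- y)) by (rewrite exp_Ropp, Rinv_inv; auto).
  destruct HE as [HE1 HE2]. revert HE1 HE2. generalize (exp (- y)). intros E HE1 HE2.
  field. repeat split; nra.
Qed.

Lemma is_series_fsum (f : nat -> nat -> R) (l : nat -> R) K :
  (forall k, is_series (f k) (l k)) ->
  is_series (fun m => fsum (fun k => f k m) K) (fsum l K).
Proof.
  intros H. induction K; simpl.
  - assert (is_series (fun n => 0 * 0 ^ n) (0 * / (1 - 0))).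
    { apply is_series_scalR. apply is_series_geom. rewrite Rabs_R0. lra. }
    rewrite Rmult_0_l in H0. apply is_series_extR with (fun n => 0 * 0 ^ n); auto. intros; ring.
  - apply is_series_plusR; auto.
Qed.

Lemma geo_closed z K : 1 + z ^ 2 <> 0 ->
  fsum (fun k => z ^ (4 * k + 5) - z ^ (4 * k + 3)) K = - (z ^ 3 * (1 - z ^ (4 * K)) / (1 + z ^ 2)).
Proof.
  intros Hz. induction K as [|K IHK].
  - simpl. field. intro HH; apply Hz; rewrite <- HH; ring.
  - cbn [fsum]. rewrite IHK. replace (4 * S K)%nat with (4 * K + 4)%nat by lia.
    rewrite !pow_add. field. intro HH; apply Hz; rewrite <- HH; ring.
Qed.

Lemma frac_mono a b : 0 <= a -> a <= b -> b < 1 -> a / (1 - a) <= b / (1 - b).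
Proof.
  intros. assert (b / (1 - b) - a / (1 - a) = (b - a) / ((1 - a) * (1 - b))) by (field; lra).
  assert (0 <= (b - a) / ((1 - a) * (1 - b))).
  { apply Rmult_le_pos; [lra|]. apply Rlt_le, Rinv_0_lt_compat. nra. }
  lra.
Qed.

Lemma pow_le1 q n : 0 <= q <= 1 -> q ^ n <= 1.
Proof. intros. induction n; simpl; [lra|]. assert (0 <= q ^ n) by (apply pow_le; lra). nra. Qed.

Lemma pow_lt1 q n : 0 <= q < 1 -> q ^ (S n) < 1.
Proof. intros. simpl. pose proof (pow_le1 q n). assert (0 <= q ^ n) by (apply pow_le; lra). nra. Qed.

Section Conv.
Variable d : R.
Hypothesis dpos : 0 < d.

Let x := PI ^ 2 / (2 * d).
Lemma x_pos : 0 < x.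
Proof. unfold x. pose proof PI_RGT_0. apply Rdiv_lt_0_compat; nra. Qed.

Let Q := exp (- x).
Lemma Q_bounds : 0 < Q < 1.
Proof. unfold Q. pose proof x_pos. split; [apply exp_pos|]. rewrite <- exp_0. apply exp_increasing. lra. Qed.

Let bt k := beta_term d (PI / 2) (S k).
Let w k := Q ^ (4 * k + 3).

Lemma bt_closed k : bt k = 2 * (w k * Q ^ 2 / (1 - w k * Q ^ 2) - w k / (1 - w k)).
Proof.
  unfold bt, beta_term, w.
  replace (PI * (PI / 2) / d) with x by (unfold x; field; lra).
  replace (2 * PI ^ 2 * INR (S k) / d) with (INR (4 * k + 4) * x).
  2: { unfold x. rewrite plus_INR, mult_INR, (S_INR k). replace (INR 4) with 4 by (simpl; ring). field. lra. }
  unfold sinh, cosh.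
  rewrite (exp_pow_nat x (4 * k + 4)). fold Q.
  replace (exp x) with (/ Q) by (unfold Q; rewrite exp_Ropp, Rinv_inv; auto).
  replace (exp (- x)) with Q by reflexivity.
  replace (exp (INR (4 * k + 4) * x)) with (/ Q ^ (4 * k + 4)) by (unfold Q; rewrite <- exp_pow_nat, exp_Ropp, Rinv_inv; reflexivity).
  replace (4 * k + 4)%nat with (S (4 * k + 3)) by lia.
  pose proof Q_bounds as [HQ1 HQ2].
  assert (Hw : 0 < Q ^ (4 * k + 3) < 1).
  { split; [apply pow_lt; auto|]. replace (4 * k + 3)%nat with (S (4 * k + 2)) by lia. apply pow_lt1; lra. }
  change (Q ^ (S (4 * k + 3))) with (Q * Q ^ (4 * k + 3)).
  revert Hw. generalize (Q ^ (4 * k + 3)). intros W [Hw1 Hw2].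
  assert (HQ : 0 < Q ^ 2 < 1) by (simpl; split; nra).
  assert (0 < W * Q ^ 2 < 1) by (split; nra).
  field. repeat split; try nra.
Qed.

Let z m := Q ^ (S m).
Definition tau k m := 2 * (z m ^ (4 * k + 5) - z m ^ (4 * k + 3)).

Lemma pow_swap (a m : nat) : (Q ^ a) ^ (S m) = (Q ^ (S m)) ^ a.
Proof. rewrite <- !pow_mult. f_equal. lia. Qed.

Lemma bt_series k : is_series (tau k) (bt k).
Proof.
  rewrite bt_closed. unfold tau, w.
  pose proof Q_bounds as [HQ1 HQ2].
  assert (E : Q ^ (4 * k + 3) * Q ^ 2 = Q ^ (4 * k + 5)) by (rewrite <- pow_add; f_equal; lia).
  rewrite E.
  assert (H5 : 0 <= Q ^ (4 * k + 5) < 1).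
  { split; [apply pow_le; lra|]. replace (4 * k + 5)%nat with (S (4 * k + 4)) by lia. apply pow_lt1; lra. }
  assert (H3 : 0 <= Q ^ (4 * k + 3) < 1).
  { split; [apply pow_le; lra|]. replace (4 * k + 3)%nat with (S (4 * k + 2)) by lia. apply pow_lt1; lra. }
  apply is_series_scalR. apply is_series_minusR.
  - apply is_series_extR with (fun m => (Q ^ (4 * k + 5)) ^ (S m)).
    + intros; unfold z; apply pow_swap.
    + apply is_series_geomS; auto.
  - apply is_series_extR with (fun m => (Q ^ (4 * k + 3)) ^ (S m)).
    + intros; unfold z; apply pow_swap.
    + apply is_series_geomS; auto.
Qed.

Lemma z_bounds m : 0 < z m < 1.
Proof. pose proof Q_bounds. unfold z. split; [apply pow_lt; lra| apply pow_lt1; lra]. Qed.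

Lemma tau_sum K m : fsum (fun k => tau k m) K = - (2 * (z m ^ 3 * (1 - z m ^ (4 * K)) / (1 + z m ^ 2))).
Proof.
  unfold tau. rewrite fsum_scal, geo_closed. ring.
  pose proof (z_bounds m). nra.
Qed.

Lemma sech_z m : sech (INR (S m) * x) = 2 * z m / (1 + z m ^ 2).
Proof.
  unfold sech, z, Q. rewrite <- exp_pow_nat.
  pose proof (exp_pos (- (INR (S m) * x))).
  replace (exp (INR (S m) * x)) with (/ exp (- (INR (S m) * x))) by (rewrite exp_Ropp, Rinv_inv; auto).
  revert H. generalize (exp (- (INR (S m) * x))). intros E HE. field. split; nra.
Qed.

Let P0' := Series (fun m => sech (INR (S m) * x)).

Lemma coth_val : coth (PI * (PI / 2) / (2 * d)) = 1 + 2 * (Q / (1 - Q)).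
Proof.
  replace (PI * (PI / 2) / (2 * d)) with (x / 2) by (unfold x; field; lra).
  pose proof x_pos. rewrite coth_exp by lra.
  replace (exp (- (x / 2)) ^ 2) with Q.
  2: { unfold Q. replace (- x) with (- (x / 2) + - (x / 2)) by field. rewrite exp_plus. ring. }
  pose proof Q_bounds. field. lra.
Qed.

Lemma partial_bound K : 1 + P0' <= coth (PI * (PI / 2) / (2 * d)) + fsum bt K.
Proof.
  set (b := fun m => 2 * z m + fsum (fun k => tau k m) K).
  assert (Hb : is_series b (2 * (Q / (1 - Q)) + fsum bt K)).
  { apply is_series_plusR.
    - apply is_series_scalR. apply is_series_geomS. pose proof Q_bounds; lra.
    - apply is_series_fsum. apply bt_series. }
  rewrite coth_val.
  replace (1 + 2 * (Q / (1 - Q)) + fsum bt K) with (1 + Series b) by (rewrite (is_series_unique _ _ Hb); ring).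
  apply Rplus_le_compat_l. unfold P0'. apply Series_le; [| eexists; eauto].
  intros m. rewrite sech_z. unfold b. rewrite tau_sum.
  pose proof (z_bounds m) as [Hz1 Hz2].
  assert (0 <= z m ^ (4 * K)) by (apply pow_le; lra).
  assert (z m ^ (4 * K) <= 1) by (apply pow_le1; lra).
  assert (Hp : 0 < 1 + z m ^ 2) by nra.
  split.
  - apply Rlt_le, Rdiv_lt_0_compat; lra.
  - assert (0 <= z m ^ 3 * z m ^ (4 * K) / (1 + z m ^ 2)).
    { apply Rmult_le_pos; [|apply Rlt_le, Rinv_0_lt_compat; auto]. apply Rmult_le_pos; auto. apply pow_le; lra. }
    replace (2 * z m / (1 + z m ^ 2)) with (2 * z m - 2 * (z m ^ 3 / (1 + z m ^ 2))) by (field; lra).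
    replace (2 * (z m ^ 3 * (1 - z m ^ (4 * K)) / (1 + z m ^ 2))) with
       (2 * (z m ^ 3 / (1 + z m ^ 2)) - 2 * (z m ^ 3 * z m ^ (4 * K) / (1 + z m ^ 2))) by (field; lra).
    lra.
Qed.

Lemma bt_nonpos k : bt k <= 0.
Proof.
  rewrite bt_closed. unfold w. pose proof Q_bounds as [HQ1 HQ2].
  assert (H3 : 0 < Q ^ (4 * k + 3) < 1).
  { split; [apply pow_lt; lra|]. replace (4 * k + 3)%nat with (S (4 * k + 2)) by lia. apply pow_lt1; lra. }
  assert (0 < Q ^ 2 < 1) by (simpl; split; nra).
  assert (Q ^ (4 * k + 3) * Q ^ 2 / (1 - Q ^ (4 * k + 3) * Q ^ 2) <= Q ^ (4 * k + 3) / (1 - Q ^ (4 * k + 3))).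
  { apply frac_mono; nra. }
  lra.
Qed.

Lemma bracket_ge : 1 + P0' <= coth (PI * (PI / 2) / (2 * d)) + Series bt.
Proof.
  set (c := coth (PI * (PI / 2) / (2 * d))).
  assert (Hex : ex_finite_lim_seq (fun K => fsum bt K)).
  { apply ex_finite_lim_seq_decr with (1 + P0' - c).
    - intros n. simpl. pose proof (bt_nonpos n). lra.
    - intros n. pose proof (partial_bound n). unfold c. lra. }
  destruct Hex as [l Hl].
  assert (Hs : is_series bt l).
  { apply is_series_Reals. apply is_lim_seq_Reals.
    apply is_lim_seq_incr_1 in Hl.
    apply is_lim_seq_ext with (fun n => fsum bt (S n)); auto.
    intros; apply fsum_sum_f. }
  rewrite (is_series_unique _ _ Hs).
  assert (Rbar_le (1 + P0' - c) l).
  { apply (is_lim_seq_le (fun _ => 1 + P0' - c) (fun K => fsum bt K)); auto.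
    - intros n. pose proof (partial_bound n). unfold c. lra.
    - apply is_lim_seq_const. }
  simpl in H. lra.
Qed.

Lemma Pt_val : Pt x 0 = 1 + 2 * P0'.
Proof.
  unfold Pt.
  assert (sech 0 = 1) by (unfold sech; rewrite Ropp_0, exp_0; field).
  rewrite H. f_equal.
  apply is_series_unique.
  apply is_series_extR with (fun m => 2 * sech (INR (S m) * x)).
  - intros m. unfold Pser. rewrite Rplus_0_l. replace (0 - INR (S m) * x) with (- (INR (S m) * x)) by ring.
    rewrite sech_even. ring.
  - apply is_series_scalR. apply Series_correct.
    apply ex_series_leR with (fun m => 2 * Q ^ (S m)).
    + intros m. rewrite sech_z. pose proof (z_bounds m).
      rewrite Rabs_right.
      * unfold z. assert (1 <= 1 + (Q ^ (S m)) ^ 2) by (pose proof (pow2_ge_0 (Q ^ (S m))); lra).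
        unfold Rdiv. rewrite <- (Rmult_1_r (2 * Q ^ (S m))) at 2.
        apply Rmult_le_compat_l; [pose proof Q_bounds; assert (0 < Q ^ (S m)) by (apply pow_lt; lra); lra|]. rewrite <- Rinv_1. apply Rinv_le_contravar; lra.
      * apply Rle_ge, Rlt_le, Rdiv_lt_0_compat; nra.
    + apply ex_series_geomS. pose proof Q_bounds; lra.
Qed.

Lemma beta_ge_1 : 1 <= beta d (PI / 2).
Proof.
  unfold beta. fold bt.
  pose proof bracket_ge. pose proof Pt_val.
  pose proof (hP0_ge_pi x x_pos). rewrite H0 in H1.
  pose proof PI_RGT_0.
  replace (- (PI / 2) / d + PI / d * coth (PI * (PI / 2) / (2 * d)) + PI / d * Series bt)
    with (x / PI * (-1 + 2 * (coth (PI * (PI / 2) / (2 * d)) + Series bt))) by (unfold x; field; lra).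
  assert (x / PI * (1 + 2 * P0') <= x / PI * (-1 + 2 * (coth (PI * (PI / 2) / (2 * d)) + Series bt))).
  { apply Rmult_le_compat_l; [apply Rlt_le, Rdiv_lt_0_compat; auto; apply x_pos| lra]. }
  assert (1 <= x / PI * (1 + 2 * P0')).
  { replace (x / PI * (1 + 2 * P0')) with ((x * (1 + 2 * P0')) / PI) by (field; lra).
    apply Rmult_le_reg_r with PI; auto. unfold Rdiv. rewrite Rmult_assoc, Rinv_l; lra. }
  lra.
Qed.
End Conv.

Theorem theorem1 : forall d : R, 0 < d -> 1 <= beta d (PI / 2).
Proof. intros d Hd. apply beta_ge_1; auto. Qed.
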